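(* For every $n\ge1$, the reflexive $n$-path graph $I_n$ and the terminal graph $K^1$, regarded as simplicial complexes, are cofibrant in the Thomason model structure on $\mathbf{Cpx}$, and the inclusion $K^1\hookrightarrow I_n$ of the terminal graph as an endpoint of $I_n$ is a Thomason cofibration.
   Context: A simplicial complex consists of a vertex set and a collection of nonempty finite subsets (simplices) containing all singletons and closed under nonempty subsets; maps are vertex functions preserving simplices; $\mathbf{Cpx}$ is the category. Reflexive graphs are the complexes whose simplices have at most two elements. $I_n$ has vertices $0,\dots,n$ and edges $\{i,i+1\}$; $K^1$ is the one-vertex graph. $\mathbf{\Delta}^n$ is the complex on $\{0,\dots,n\}$ with all nonempty subsets simplices, $\mathrm{Sing}(K)_n=\mathbf{Cpx}(\mathbf{\Delta}^n,K)$, $\mathrm{Ex}$ is the right adjoint of barycentric subdivision. Thomason model structure on $\mathbf{Cpx}$: $f$ is a weak equivalence iff $\mathrm{Sing}(f)$ is a weak homotopy equivalence, a fibration iff $\mathrm{Ex}^2\mathrm{Sing}(f)$ is a Kan fibration, and a cofibration iff it has the left lifting property against all trivial fibrations. *)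

(* Defs.v *)
From Stdlib Require Import Relations ProofIrrelevance List.
From mathcomp Require Import all_boot.
Set Implicit Arguments.
Unset Strict Implicit.
Unset Printing Implicit Defensive.

Lemma sig_eq (A : Type) (P : A -> Prop) (x y : sig P) :
  proj1_sig x = proj1_sig y -> x = y.
Proof. case: x y => x px [y py] /= E; subst y; f_equal; apply: proof_irrelevance. Qed.

Lemma In_of_mem (T : eqType) (x : T) (s : seq T) : x \in s -> List.In x s.
Proof. elim: s => //= y s IH; rewrite in_cons => /orP [/eqP->|/IH]; auto. Qed.

Record cpx := Cpx {
  vtx : Type;
  simp : (vtx -> Prop) -> Prop;
  simp_fin : forall S, simp S -> exists s : list vtx, forall x, S x -> List.In x s;
  simp_ne : forall S, simp S -> exists x, S x;
  simp_single : forall v, simp (fun x => x = v);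
  simp_sub : forall S T, simp S -> (exists x, T x) -> (forall x, T x -> S x) -> simp T }.

Arguments simp : clear implicits.

Definition img (A B : Type) (f : A -> B) (S : A -> Prop) : B -> Prop :=
  fun y => exists x, S x /\ f x = y.

Definition preserves (K L : cpx) (f : vtx K -> vtx L) : Prop :=
  forall S, simp K S -> simp L (img f S).

Definition hom (K L : cpx) := {f : vtx K -> vtx L | preserves f}.

Lemma comp_pres (K L M : cpx) (f : hom K L) (g : hom L M) :
  preserves (fun x => proj1_sig g (proj1_sig f x)).
Proof.
move=> S HS; have HfS := proj2_sig f _ HS; have HgS := proj2_sig g _ HfS.
apply: (simp_sub HgS).
  by case: (simp_ne HS) => x Sx; exists (proj1_sig g (proj1_sig f x)); exists x.
move=> y [x [Sx <-]]; exists (proj1_sig f x); split=> //; by exists x.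
Qed.

Definition hom_comp (K L M : cpx) (f : hom K L) (g : hom L M) : hom K M :=
  exist _ (fun x => proj1_sig g (proj1_sig f x)) (comp_pres f g).

Definition Delta (n : nat) : cpx.
Proof.
refine (@Cpx 'I_n.+1 (fun S => exists x, S x) _ _ _ _).
- move=> S _; exists (enum 'I_n.+1) => x _; apply: In_of_mem; by rewrite mem_enum.
- by [].
- by move=> v; exists v.
- by [].
Defined.

Definition In_simp (n : nat) (S : 'I_n.+1 -> Prop) : Prop :=
  (exists x, S x) /\
  forall x y : 'I_n.+1, S x -> S y ->
    [|| x == y, (x.+1 == y :> nat) | (y.+1 == x :> nat)].

Definition In (n : nat) : cpx.
Proof.
refine (@Cpx 'I_n.+1 (@In_simp n) _ _ _ _).
- move=> S _; exists (enum 'I_n.+1) => x _; apply: In_of_mem; by rewrite mem_enum.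
- by move=> S [].
- move=> v; split; first by exists v.
  by move=> x y -> ->; rewrite eqxx.
- move=> S T [_ HS] HT sub; split=> // x y Tx Ty; exact: HS (sub _ Tx) (sub _ Ty).
Defined.

Definition K1 : cpx.
Proof.
refine (@Cpx unit (fun S => exists x, S x) _ _ _ _).
- move=> S _; exists [:: tt] => -[] _; by left.
- by [].
- by move=> v; exists v.
- by [].
Defined.

Definition Empty : cpx.
Proof.
refine (@Cpx void (fun _ => False) _ _ _ _) => //; by case.
Defined.

Definition from_empty_fun (K : cpx) : vtx Empty -> vtx K := fun v => match v with end.
Lemma from_empty_pres (K : cpx) : preserves (from_empty_fun K).
Proof. by []. Qed.
Definition from_empty (K : cpx) : hom Empty K := exist _ (from_empty_fun K) (@from_empty_pres K).

Lemma endpt_pres (n : nat) (e : 'I_n.+1) : preserves (K := K1) (L := In n) (fun _ => e).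
Proof.
move=> S [x Sx]; split; first by exists e; exists x.
by move=> y z [? [_ <-]] [? [_ <-]]; rewrite eqxx.
Qed.
Definition endpt (n : nat) (e : 'I_n.+1) : hom K1 (In n) := exist _ (fun _ => e) (endpt_pres e).

Definition mono (m n : nat) :=
  {t : {ffun 'I_m.+1 -> 'I_n.+1} | [forall i : 'I_m.+1, forall j : 'I_m.+1, (i <= j) ==> (t i <= t j)]}.

Lemma mono_comp_prop m k n (s : mono m k) (t : mono k n) :
  [forall i : 'I_m.+1, forall j : 'I_m.+1, (i <= j) ==>
     ([ffun x => proj1_sig t (proj1_sig s x)] i <= [ffun x => proj1_sig t (proj1_sig s x)] j)].
Proof.
apply/forallP => i; apply/forallP => j; apply/implyP => ij; rewrite !ffunE.
have /forallP/(_ (proj1_sig s i))/forallP/(_ (proj1_sig s j))/implyP := proj2_sig t; apply.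
by have /forallP/(_ i)/forallP/(_ j)/implyP := proj2_sig s; apply.
Qed.

Definition mono_comp m k n (s : mono m k) (t : mono k n) : mono m n :=
  exist _ [ffun x => proj1_sig t (proj1_sig s x)] (mono_comp_prop s t).

Lemma mono_pres m n (t : mono m n) :
  preserves (K := Delta m) (L := Delta n) (fun i => proj1_sig t i).
Proof. move=> S [x Sx]; by exists (proj1_sig t x); exists x. Qed.
Definition mono_hom m n (t : mono m n) : hom (Delta m) (Delta n) := exist _ (fun i => proj1_sig t i) (mono_pres t).

Lemma const_mono_prop n (c : 'I_2) :
  [forall i : 'I_n.+1, forall j : 'I_n.+1, (i <= j) ==> ([ffun _ : 'I_n.+1 => c] i <= [ffun _ : 'I_n.+1 => c] j)].
Proof. apply/forallP => i; apply/forallP => j; by rewrite !ffunE leqnn implybT. Qed.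
Definition c0 n : mono n 1 := exist _ [ffun _ : 'I_n.+1 => ord0] (const_mono_prop n ord0).
Definition c1 n : mono n 1 := exist _ [ffun _ : 'I_n.+1 => ord_max] (const_mono_prop n ord_max).

Unset Implicit Arguments.
Record sdata := SData {
  sobj : nat -> Type;
  sact : forall m n, mono m n -> sobj n -> sobj m }.
Arguments sact s {m n} _ _.

Record smap (X Y : sdata) := SMap {
  smfun :> forall n, sobj X n -> sobj Y n;
  smnat : forall m n (t : mono m n) x, smfun m (sact X t x) = sact Y t (smfun n x) }.
Arguments smfun {X Y} _ _ _.
Arguments smnat {X Y} _ _ _ _ _.
Arguments SMap {X Y} _ _.
Set Implicit Arguments.

Definition smap_comp (X Y Z : sdata) (f : smap X Y) (g : smap Y Z) : smap X Z.
Proof.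
refine (@SMap X Z (fun n x => g n (f n x)) _).
by move=> m n t x; rewrite smnat smnat.
Defined.

Definition lawful (X : sdata) : Prop :=
  (forall n (i : mono n n), (forall j, proj1_sig i j = j) ->
     forall x, sact X i x = x) /\
  (forall m k n (s : mono m k) (t : mono k n) (r : mono m n),
     (forall j, proj1_sig r j = proj1_sig t (proj1_sig s j)) ->
     forall x, sact X r x = sact X s (sact X t x)).

Record sset := SSet { ssd :> sdata; ssd_law : lawful ssd }.

Definition stdsimp (n : nat) : sdata :=
  @SData (fun m => mono m n) (fun m k s t => mono_comp s t).

Definition horn_pred n (k : 'I_n.+1) m (t : mono m n) : Prop :=
  [exists i, (i != k) && [forall j, proj1_sig t j != i]].

Lemma horn_act_prop n (k : 'I_n.+1) m m' (s : mono m' m) (t : mono m n) :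
  horn_pred k t -> horn_pred k (mono_comp s t).
Proof.
move=> /existsP [i /andP [ik /forallP H]]; apply/existsP; exists i.
rewrite ik /=; apply/forallP => j /=; by rewrite ffunE H.
Qed.

Definition horn (n : nat) (k : 'I_n.+1) : sdata :=
  @SData (fun m => {t : mono m n | horn_pred k t})
         (fun m' m s x => exist _ (mono_comp s (proj1_sig x)) (horn_act_prop s (proj2_sig x))).

Definition hincl n (k : 'I_n.+1) : smap (horn k) (stdsimp n) :=
  @SMap (horn k) (stdsimp n) (fun m x => proj1_sig x) (fun _ _ _ _ => erefl).

Definition kan_fibration (E B : sdata) (p : smap E B) : Prop :=
  forall n (k : 'I_n.+1), 0 < n ->
  forall (a : smap (horn k) E) (b : smap (stdsimp n) B),
    (forall m x, p m (a m x) = b m (hincl k m x)) ->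
    exists h : smap (stdsimp n) E,
      (forall m x, h m (hincl k m x) = a m x) /\ (forall m x, p m (h m x) = b m x).

Definition sterm : sdata := @SData (fun _ => unit) (fun _ _ _ _ => tt).
Definition to_term (X : sdata) : smap X sterm :=
  @SMap X sterm (fun _ _ => tt) (fun _ _ _ _ => erefl).
Definition kan_complex (X : sdata) : Prop := kan_fibration (to_term X).

Definition prodI (Y : sdata) : sdata :=
  @SData (fun n => (sobj Y n * mono n 1)%type)
         (fun m n t yu => (sact Y t yu.1, mono_comp t yu.2)).

Definition homotopic (Y Z : sdata) (g h : smap Y Z) : Prop :=
  exists H : smap (prodI Y) Z,
    (forall n y, H n (y, c0 n) = g n y) /\ (forall n y, H n (y, c1 n) = h n y).

(* same connected component of the mapping space Fun(Y,Z) *)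
Definition htpc (Y Z : sdata) : relation (smap Y Z) :=
  clos_refl_sym_trans (smap Y Z) (@homotopic Y Z).

(* weak homotopy equivalence (Kerodon Def. 3.2.4.1): for every Kan complex Z,
   pi_0 Fun(Y,Z) -> pi_0 Fun(X,Z) is bijective *)
Definition weq (X Y : sdata) (f : smap X Y) : Prop :=
  forall Z : sset, kan_complex Z ->
    (forall g' : smap X Z, exists g : smap Y Z, htpc (smap_comp f g) g') /\
    (forall g1 g2 : smap Y Z, htpc (smap_comp f g1) (smap_comp f g2) -> htpc g1 g2).

Definition Sing (K : cpx) : sdata :=
  @SData (fun n => hom (Delta n) K) (fun m n t g => hom_comp (mono_hom t) g).

Definition Sing_map (K L : cpx) (f : hom K L) : smap (Sing K) (Sing L).
Proof.
refine (@SMap (Sing K) (Sing L) (fun n g => hom_comp g f) _).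
by move=> m n t x; apply: sig_eq.
Defined.

(* m-simplices of sd Delta[n] = nerve of the poset of nonempty subsets of [n] *)
Definition chain (n m : nat) :=
  {c : {ffun 'I_m.+1 -> {set 'I_n.+1}} |
     [forall i, c i != set0] && [forall i : 'I_m.+1, forall j : 'I_m.+1, (i <= j) ==> (c i \subset c j)]}.

Lemma push_prop n' n m (t : mono n' n) (c : chain n' m) :
  let d := [ffun i => (fun x => proj1_sig t x) @: proj1_sig c i] in
  [forall i, d i != set0] && [forall i : 'I_m.+1, forall j : 'I_m.+1, (i <= j) ==> (d i \subset d j)].
Proof.
case: c => c /andP [/forallP ne /forallP mo] /=; apply/andP; split.
  by apply/forallP => i; rewrite ffunE imset_eq0 ne.
apply/forallP => i; apply/forallP => j; apply/implyP => ij; rewrite !ffunE.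
by apply: imsetS; move: (mo i) => /forallP/(_ j)/implyP; apply.
Qed.

(* image of a chain along t : [n'] -> [n], i.e. sd(t) *)
Definition push n' n m (t : mono n' n) (c : chain n' m) : chain n m :=
  exist _ [ffun i => (fun x => proj1_sig t x) @: proj1_sig c i] (push_prop t c).

(* a simplicial map sd Delta[n] -> X, given by its values on all simplices *)
Definition exnat (X : sdata) (n : nat) (phi : forall m, chain n m -> sobj X m) : Prop :=
  forall k m (t : mono m k) (c : chain n k) (c' : chain n m),
    (forall i, proj1_sig c' i = proj1_sig c (proj1_sig t i)) ->
    phi m c' = sact X t (phi k c).

Lemma Ex_act_prop (X : sdata) n' n (t : mono n' n)
  (phi : {phi : forall m, chain n m -> sobj X m | exnat phi}) :
  exnat (fun m c => proj1_sig phi m (push t c)).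
Proof.
move=> k m s c c' E; apply: (proj2_sig phi) => i /=; by rewrite !ffunE E.
Qed.

Definition Ex (X : sdata) : sdata :=
  @SData (fun n => {phi : forall m, chain n m -> sobj X m | exnat phi})
         (fun n' n t phi => exist _ (fun m c => proj1_sig phi m (push t c)) (Ex_act_prop t phi)).

Lemma Ex_map_prop (X Y : sdata) (f : smap X Y) n
  (phi : {phi : forall m, chain n m -> sobj X m | exnat phi}) :
  exnat (X := Y) (fun m c => f m (proj1_sig phi m c)).
Proof. move=> k m t c c' E; by rewrite (proj2_sig phi _ _ t c c' E) smnat. Qed.

Definition Ex_map (X Y : sdata) (f : smap X Y) : smap (Ex X) (Ex Y).
Proof.
refine (@SMap (Ex X) (Ex Y) (fun n phi => exist _ (fun m c => f m (proj1_sig phi m c)) (Ex_map_prop f phi)) _).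
by move=> m n t x; apply: sig_eq.
Defined.

Definition cpx_weq (K L : cpx) (f : hom K L) : Prop := weq (Sing_map f).
Definition cpx_fib (K L : cpx) (f : hom K L) : Prop :=
  kan_fibration (Ex_map (Ex_map (Sing_map f))).
Definition cpx_trivfib (K L : cpx) (f : hom K L) : Prop := cpx_fib f /\ cpx_weq f.

Definition llp (A B X Y : cpx) (i : hom A B) (p : hom X Y) : Prop :=
  forall (u : hom A X) (v : hom B Y),
    (forall a, proj1_sig p (proj1_sig u a) = proj1_sig v (proj1_sig i a)) ->
    exists h : hom B X,
      (forall a, proj1_sig h (proj1_sig i a) = proj1_sig u a) /\
      (forall b, proj1_sig p (proj1_sig h b) = proj1_sig v b).

Definition cofibration (A B : cpx) (i : hom A B) : Prop :=
  forall (X Y : cpx) (p : hom X Y), cpx_trivfib p -> llp i p.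

Definition cofibrant (K : cpx) : Prop := cofibration (from_empty K).

(* Main.v *)
Require Import Defs.
From mathcomp Require Import all_boot.
From Stdlib Require Import FunctionalExtensionality ProofIrrelevance PropExtensionality Classical Relations.
From mathcomp Require Import zify.
Set Implicit Arguments. Unset Strict Implicit. Unset Printing Implicit Defensive.

Lemma smap_ext (X Y : sdata) (f g : smap X Y) : (forall n x, f n x = g n x) -> f = g.
Proof.
case: f g => f Hf [g Hg] /= E.
have E' : f = g by apply: functional_extensionality_dep => n; apply: functional_extensionality => x; apply: E.
subst g; f_equal; apply: proof_irrelevance.
Qed.

Definition Zd : sdata := @SData (fun _ => Prop) (fun _ _ _ P => P).
Lemma Zd_law : lawful Zd. Proof. by split. Qed.
Definition Zp : sset := SSet Zd_law.

Lemma constm_prop m n (c : 'I_n.+1) :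
  [forall i : 'I_m.+1, forall j : 'I_m.+1, (i <= j) ==> ([ffun _ : 'I_m.+1 => c] i <= [ffun _ : 'I_m.+1 => c] j)].
Proof. apply/forallP => i; apply/forallP => j; by rewrite !ffunE leqnn implybT. Qed.
Definition constm m n (c : 'I_n.+1) : mono m n := exist _ [ffun _ => c] (constm_prop m c).

Lemma kappa_pred n (k : 'I_n.+1) : 0 < n -> horn_pred k (@constm 0 n k).
Proof.
move=> Hn; apply/existsP.
have [-> | nk] := eqVneq k ord0.
  exists ord_max; rewrite /= -(inj_eq val_inj) /= -lt0n Hn /=.
  apply/forallP => j; rewrite ffunE -(inj_eq val_inj) /= eq_sym -lt0n Hn. done.
exists ord0; rewrite eq_sym nk /=; apply/forallP => j; by rewrite ffunE.
Qed.

Lemma edge_prop n (u w : 'I_n.+1) : u <= w ->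
  [forall i : 'I_2, forall j : 'I_2, (i <= j) ==> ([ffun i : 'I_2 => if i == ord0 then u else w] i <= [ffun i : 'I_2 => if i == ord0 then u else w] j)].
Proof.
move=> H; apply/forallP => i; apply/forallP => j; apply/implyP => ij; rewrite !ffunE.
case: (i =P ord0) => [_|ni]; case: (j =P ord0) => [jz|_] //.
exfalso; apply: ni; apply/val_inj; move: ij; rewrite jz /=; by case: (nat_of_ord i).
Qed.
Definition edgem n (u w : 'I_n.+1) (H : u <= w) : mono 1 n := exist _ [ffun i : 'I_2 => if i == ord0 then u else w] (edge_prop H).

Lemma horn_eq n (k : 'I_n.+1) m (v w : {t : mono m n | horn_pred k t}) :
  proj1_sig (proj1_sig v) = proj1_sig (proj1_sig w) -> v = w.
Proof. move=> E; apply: sig_eq; apply: sig_eq; exact: E. Qed.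

Lemma vert_conn n (k : 'I_n.+1) (a : smap (horn k) Zp) (i0 : 'I_n.+1) (i0k : i0 != k)
  (v1 v2 : {t : mono 0 n | horn_pred k t}) :
  proj1_sig (proj1_sig v1) ord0 <= proj1_sig (proj1_sig v2) ord0 ->
  proj1_sig (proj1_sig v1) ord0 != i0 -> proj1_sig (proj1_sig v2) ord0 != i0 ->
  a 0 v1 = a 0 v2.
Proof.
move=> H n1 n2.
set E := edgem H.
have HE : horn_pred k E.
  apply/existsP; exists i0; rewrite i0k /=; apply/forallP => j; rewrite ffunE.
  by case: (j == ord0).
set e : sobj (horn k) 1 := exist _ E HE.
have L : a 0 (sact (horn k) (c0 0) e) = a 0 (sact (horn k) (c1 0) e).
  by rewrite (smnat a 0 1 (c0 0) e) (smnat a 0 1 (c1 0) e).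
have -> : v1 = sact (horn k) (c0 0) e.
  apply: horn_eq; apply/ffunP => j; rewrite /= !ffunE (ord1 j) /=. done.
have -> : v2 = sact (horn k) (c1 0) e.
  apply: horn_eq; apply/ffunP => j; rewrite /= !ffunE (ord1 j) /=. done.
exact: L.
Qed.

Lemma Zp_kan : kan_complex Zp.
Proof.
move=> n k Hn a b _.
set kap : sobj (horn k) 0 := exist _ (@constm 0 n k) (kappa_pred k Hn).
have Hv : forall v : sobj (horn k) 0, a 0 v = a 0 kap.
  move=> v; have := proj2_sig v => /existsP [i0 /andP [i0k /forallP Hi0]].
  have nk : proj1_sig (proj1_sig kap) ord0 != i0 by rewrite /= ffunE eq_sym.
  have nv := Hi0 ord0.
  case: (leqP (proj1_sig (proj1_sig v) ord0) k) => H.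
    apply: (@vert_conn n k a i0 i0k v kap) => //; by rewrite /= ffunE.
  symmetry; apply: (@vert_conn n k a i0 i0k kap v) => //; rewrite /= ffunE; exact: ltnW.
have Hall : forall m x, a m x = a 0 kap.
  move=> m x; rewrite -(Hv (sact (horn k) (@constm 0 m ord0) x)).
  by rewrite (smnat a 0 m (@constm 0 m ord0) x).
exists (@SMap (stdsimp n) Zp (fun m _ => a 0 kap) (fun _ _ _ _ => erefl)).
split=> [m x|m x]; first by rewrite Hall.
by case: (b m x).
Qed.
Definition Ucup m0 m' m'' (c : chain m0 m') (d : chain m' m'') (j : 'I_m''.+1) : {set 'I_m0.+1} :=
  \bigcup_(i in proj1_sig d j) proj1_sig c i.

Section PhiS.
Variables (K : cpx) (m : nat) (f : {set 'I_m.+1} -> vtx K).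
Hypothesis Hf : simp K (fun y => exists U, f U = y).

Lemma inner_pres m' m'' (c : chain m m') (d : chain m' m'') :
  preserves (K := Delta m'') (L := K) (fun j => f (Ucup c d j)).
Proof.
move=> S HS; apply: (simp_sub Hf).
  case: (simp_ne HS) => j Sj; exists (f (Ucup c d j)); by exists j.
move=> y [j [_ <-]]; by exists (Ucup c d j).
Qed.

Definition inner_hom m' m'' (c : chain m m') (d : chain m' m'') : hom (Delta m'') K :=
  exist _ _ (inner_pres c d).

Lemma inner_nat m' (c : chain m m') : exnat (X := Sing K) (fun m'' d => inner_hom c d).
Proof. move=> k m2 t d d' E; apply: sig_eq; apply: functional_extensionality => j /=; by rewrite /Ucup E. Qed.

Definition inner m' (c : chain m m') : sobj (Ex (Sing K)) m' := exist _ _ (inner_nat c).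

Lemma outer_nat : exnat (X := Ex (Sing K)) (fun m' c => inner c).
Proof.
move=> k m2 t c c' E; apply: sig_eq; apply: functional_extensionality_dep => m''.
apply: functional_extensionality => d.
apply: sig_eq; apply: functional_extensionality => j /=. congr f. rewrite /Ucup.
apply/setP => x; apply/bigcupP/bigcupP => [[i Hi Hx]|[i Hi Hx]].
- exists (proj1_sig t i); first by rewrite ffunE; apply: imset_f. by rewrite -E.
- rewrite ffunE in Hi; case/imsetP: Hi => i' Hi' Ei; exists i' => //; by rewrite E -Ei.
Qed.

Definition Phi : sobj (Ex (Ex (Sing K))) m := exist _ _ outer_nat.
End PhiS.

Lemma Phi_ext K m f g Hf Hg : (forall U, f U = g U) -> @Phi K m f Hf = @Phi K m g Hg.
Proof. move=> E; have E' := functional_extensionality f g E; subst g; f_equal; apply: proof_irrelevance. Qed.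

Lemma Phi_sact K m n (s : mono m n) f Hf Hf' :
  sact (Ex (Ex (Sing K))) s (@Phi K n f Hf) = @Phi K m (fun U => f ((fun x => proj1_sig s x) @: U)) Hf'.
Proof.
apply: sig_eq; apply: functional_extensionality_dep => m'; apply: functional_extensionality => c.
apply: sig_eq; apply: functional_extensionality_dep => m''; apply: functional_extensionality => d.
apply: sig_eq; apply: functional_extensionality => j /=. congr f. rewrite /Ucup.
apply/setP => x; apply/bigcupP/imsetP => [[i Hi]|[y /bigcupP[i Hi Hy] ->]].
- rewrite ffunE => /imsetP [y Hy ->]; exists y => //; apply/bigcupP; by exists i.
- exists i => //; rewrite ffunE; exact: imset_f.
Qed.

Lemma Phi_map X Y (p : hom X Y) m f Hf Hf' :
  Ex_map (Ex_map (Sing_map p)) m (@Phi X m f Hf) = @Phi Y m (fun U => proj1_sig p (f U)) Hf'.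
Proof.
apply: sig_eq; apply: functional_extensionality_dep => m'; apply: functional_extensionality => c.
apply: sig_eq; apply: functional_extensionality_dep => m''; apply: functional_extensionality => d.
by apply: sig_eq.
Qed.

Lemma img_comp K m m' (f : {set 'I_m.+1} -> vtx K) (g : {set 'I_m'.+1} -> {set 'I_m.+1}) :
  simp K (fun y => exists U, f U = y) -> simp K (fun y => exists U, f (g U) = y).
Proof.
move=> H; apply: (simp_sub H); first by exists (f (g set0)); exists set0.
move=> y [U <-]; by exists (g U).
Qed.

Lemma img_map X Y (p : hom X Y) m (f : {set 'I_m.+1} -> vtx X) :
  simp X (fun y => exists U, f U = y) -> simp Y (fun y => exists U, proj1_sig p (f U) = y).
Proof.
move=> H; have := proj2_sig p _ H => H'; apply: (simp_sub H'); first by exists (proj1_sig p (f set0)); exists set0.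
move=> y [U <-]; exists (f U); split=> //; by exists U.
Qed.
Lemma id1_prop : [forall i : 'I_2, forall j : 'I_2, (i <= j) ==> ([ffun i : 'I_2 => i] i <= [ffun i : 'I_2 => i] j)].
Proof. apply/forallP => i; apply/forallP => j; by rewrite !ffunE; apply/implyP. Qed.
Definition id1 : mono 1 1 := exist _ [ffun i : 'I_2 => i] id1_prop.

Lemma ch00_prop : [forall i, [ffun _ : 'I_1 => [set: 'I_1]] i != set0] &&
  [forall i : 'I_1, forall j : 'I_1, (i <= j) ==> ([ffun _ : 'I_1 => [set: 'I_1]] i \subset [ffun _ : 'I_1 => [set: 'I_1]] j)].
Proof.
apply/andP; split; apply/forallP => i; rewrite ?ffunE.
  by apply/set0Pn; exists ord0.
by apply/forallP => j; rewrite !ffunE subxx implybT.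
Qed.
Definition ch00 : chain 0 0 := exist _ [ffun _ : 'I_1 => [set: 'I_1]] ch00_prop.

Definition ch01f : {ffun 'I_2 -> {set 'I_2}} := [ffun i : 'I_2 => if i == ord0 then [set ord0] else setT].
Lemma ch01_prop : [forall i, ch01f i != set0] &&
  [forall i : 'I_2, forall j : 'I_2, (i <= j) ==> (ch01f i \subset ch01f j)].
Proof.
apply/andP; split; apply/forallP => i; rewrite ?ffunE.
  case: (i == ord0); apply/set0Pn; exists ord0; by rewrite ?inE.
apply/forallP => j; rewrite !ffunE; apply/implyP => ij.
case: (i =P ord0) => [_|ni]; case: (j =P ord0) => [jz|_] //; rewrite ?subsetT //.
exfalso; apply: ni; apply/val_inj; move: ij; rewrite jz /=; by case: (nat_of_ord i).
Qed.
Definition ch01 : chain 1 1 := exist _ ch01f ch01_prop.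
Definition ch0 : chain 1 0 := push (c0 0) ch00.

Lemma ch0E : forall i, proj1_sig ch0 i = proj1_sig ch01 (proj1_sig (c0 0) i).
Proof.
move=> i; rewrite /= !ffunE /=.
apply/setP => y; apply/imsetP/set1P => [[z _ ->]|->]; first by rewrite ffunE.
by exists ord0; rewrite ?ffunE ?inE.
Qed.

Lemma edge_lift (X Y : cpx) (p : hom X Y) : cpx_fib p ->
  forall (x : vtx X) (S : vtx Y -> Prop) (y1 : vtx Y),
  simp Y S -> S (proj1_sig p x) -> S y1 ->
  exists a, proj1_sig p a = y1 /\ simp X (fun z => z = x \/ z = a).
Proof.
move=> Hp x S y1 HS S0 S1.
set y0 := proj1_sig p x.
have Hx : forall m, simp X (fun z => exists U : {set 'I_m.+1}, x = z).
  move=> m; apply: (simp_sub (simp_single x)); first by exists x; exists set0.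
  by move=> z [U <-].
pose ft m (t : mono m 1) (U : {set 'I_m.+1}) := if [exists l in U, proj1_sig t l != ord0] then y1 else y0.
have Hft : forall m t, simp Y (fun y => exists U, @ft m t U = y).
  move=> m t; apply: (simp_sub HS); first by exists (ft m t set0); exists set0.
  move=> y [U <-]; rewrite /ft; by case: ifP.
have anat : forall m n (s : mono m n) (x' : sobj (horn (ord0 : 'I_2)) n),
   (fun m (_ : sobj (horn (ord0 : 'I_2)) m) => @Phi X m (fun _ => x) (Hx m)) m (sact (horn ord0) s x')
   = sact (Ex (Ex (Sing X))) s ((fun m (_ : sobj (horn (ord0 : 'I_2)) m) => @Phi X m (fun _ => x) (Hx m)) n x').
  move=> m n s x'; symmetry; exact: (Phi_sact (s:=s) (Hx n) (Hx m)).
pose A := @SMap (horn (ord0 : 'I_2)) (Ex (Ex (Sing X))) _ anat.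
have bnat : forall m n (s : mono m n) (t : sobj (stdsimp 1) n),
   (fun m (t : sobj (stdsimp 1) m) => @Phi Y m (ft m t) (Hft m t)) m (sact (stdsimp 1) s t)
   = sact (Ex (Ex (Sing Y))) s ((fun m (t : sobj (stdsimp 1) m) => @Phi Y m (ft m t) (Hft m t)) n t).
  move=> m n s t; rewrite [RHS](Phi_sact (s:=s) (Hft n t) (img_comp _ (Hft n t))); apply: Phi_ext => U.
  rewrite /ft; congr (if _ then _ else _).
  apply/existsP/existsP => [[l /andP [lU H]]|[l /andP [/imsetP [l' l'U ->] H]]].
  - exists (proj1_sig s l); rewrite imset_f //=; by rewrite ffunE in H.
  - exists l'; rewrite l'U /= ffunE; done.
pose B := @SMap (stdsimp 1) (Ex (Ex (Sing Y))) _ bnat.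
have cond : forall m x', Ex_map (Ex_map (Sing_map p)) m (A m x') = B m (hincl ord0 m x').
  move=> m [t Ht]; rewrite [LHS](Phi_map (Hx m) (img_map p (Hx m))); apply: Phi_ext => U.
  rewrite /ft; case: existsP => // -[l /andP [_ Hl]].
  have := Ht; case/existsP => i /andP [ni /forallP /(_ l)].
  move: Hl ni; rewrite -!(inj_eq val_inj) /=.
  case: (proj1_sig t l) => [[|[|tl]] ?]; case: i => [[|[|ii]] ?] //.
have [h [Hh1 Hh2]] := Hp 1 ord0 (erefl _) A B cond.
set H := h 1 id1.
set sig := proj1_sig (proj1_sig H 1 ch01) 1 ch01.
have EA : proj1_sig sig ord0 = x.
  have E1 := proj2_sig H 1 0 (c0 0) ch01 ch0 ch0E.
  have E2 := proj2_sig (proj1_sig H 1 ch01) 1 0 (c0 0) ch01 ch0 ch0E.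
  have κp : horn_pred (ord0 : 'I_2) (c0 0).
    apply/existsP; exists ord_max; apply/andP; split => //; apply/forallP => j; by rewrite ffunE.
  have E4 := Hh1 0 (exist _ (c0 0) κp).
  have E5 := smnat h 0 1 (c0 0) id1.
  have E6 : sact (stdsimp 1) (c0 0) id1 = c0 0.
    apply: sig_eq; apply/ffunP => j; by rewrite /= !ffunE.
  rewrite E6 /= in E5. rewrite E5 in E4.
  have := congr1 (fun Φ => proj1_sig (proj1_sig (proj1_sig Φ 0 ch00) 0 ch00) ord0) E4.
  rewrite /= => <-.
  rewrite -/ch0 E1 /= E2 /=. by rewrite ffunE.
have EB : proj1_sig p (proj1_sig sig ord_max) = y1.
  have := congr1 (fun Φ => proj1_sig (proj1_sig (proj1_sig Φ 1 ch01) 1 ch01) ord_max) (Hh2 1 id1).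
  rewrite /= => ->; rewrite /ft; case: existsP => // -[]; exists ord_max.
  rewrite ffunE /= andbT; apply/bigcupP; exists ord_max; by rewrite ffunE ?inE.
exists (proj1_sig sig ord_max); split=> //.
have := proj2_sig sig (fun _ => True) (ex_intro _ ord0 I) => Hs.
apply: (simp_sub Hs); first by exists x; left.
move=> z [->|->]; [exists ord0 | exists ord_max] => //.
Qed.
Lemma s0_prop : [forall i : 'I_2, forall j : 'I_2, (i <= j) ==> ([ffun _ : 'I_2 => (ord0 : 'I_1)] i <= [ffun _ : 'I_2 => (ord0 : 'I_1)] j)].
Proof. apply/forallP => i; apply/forallP => j; by rewrite !ffunE leqnn implybT. Qed.
Definition s0 : mono 1 0 := exist _ [ffun _ : 'I_2 => (ord0 : 'I_1)] s0_prop.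

Lemma htpc_vert (Y : cpx) (g1 g2 : smap (Sing Y) Zp) : htpc g1 g2 -> forall y, g1 0 y = g2 0 y.
Proof.
rewrite /htpc => Hc; induction Hc as [g h [H [H0 H1]]|g|g h _ IH|g h k _ IH1 _ IH2] => y //.
- rewrite -H0 -H1.
  pose s1 : sobj (prodI (Sing Y)) 1 := (sact (Sing Y) s0 y, id1).
  have E0 := smnat H 0 1 (c0 0) s1.
  have E1 := smnat H 0 1 (c1 0) s1.
  have F0 : sact (prodI (Sing Y)) (c0 0) s1 = (y, c0 0).
    congr pair; apply: sig_eq => /=.
      apply: functional_extensionality => i; by rewrite !ffunE (ord1 i).
    apply/ffunP => i; by rewrite !ffunE.
  have F1 : sact (prodI (Sing Y)) (c1 0) s1 = (y, c1 0).
    congr pair; apply: sig_eq => /=.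
      apply: functional_extensionality => i; by rewrite !ffunE (ord1 i).
    apply/ffunP => i; by rewrite !ffunE.
  rewrite F0 in E0; rewrite F1 in E1; by rewrite E0 E1.
- by rewrite IH1 IH2.
Qed.

Lemma surj (X Y : cpx) (p : hom X Y) : cpx_trivfib p -> forall y, exists x, proj1_sig p x = y.
Proof.
move=> [Hfib Hweq] y.
have g1nat : forall m n (t : mono m n) (s : sobj (Sing Y) n),
  (fun n (s : sobj (Sing Y) n) => exists x, proj1_sig p x = proj1_sig s ord0) m (sact (Sing Y) t s)
  = sact Zp t ((fun n (s : sobj (Sing Y) n) => exists x, proj1_sig p x = proj1_sig s ord0) n s).
  move=> m n t s /=.
  have HS : simp Y (img (proj1_sig s) (fun i => i = proj1_sig t ord0 \/ i = ord0)).
    apply: (proj2_sig s); by exists ord0; right.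
  have St : img (proj1_sig s) (fun i => i = proj1_sig t ord0 \/ i = ord0) (proj1_sig s (proj1_sig t ord0)).
    exists (proj1_sig t ord0); split=> //; by left.
  have S0 : img (proj1_sig s) (fun i => i = proj1_sig t ord0 \/ i = ord0) (proj1_sig s ord0).
    exists ord0; split=> //; by right.
  apply: propositional_extensionality; split => -[x Hx].
  - rewrite -Hx in St.
    have [a [Ha _]] := edge_lift Hfib HS St S0.
    by exists a.
  - rewrite -Hx in S0.
    have [a [Ha _]] := edge_lift Hfib HS S0 St.
    by exists a.
pose g1 := @SMap (Sing Y) Zp _ g1nat.
pose g2 := @SMap (Sing Y) Zp (fun _ _ => True) (fun _ _ _ _ => erefl).
have [_ H2] := Hweq Zp Zp_kan.
have Heq : smap_comp (Sing_map p) g1 = smap_comp (Sing_map p) g2.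
  apply: smap_ext => n s /=; apply: propositional_extensionality; split => // _.
  by exists (proj1_sig s ord0).
have := H2 g1 g2 (eq_ind_r (fun z => htpc z _) (rst_refl _ _ _) Heq).
move=> /htpc_vert.
have Hc : preserves (K := Delta 0) (L := Y) (fun _ => y).
  move=> S [i Si]; apply: (simp_sub (simp_single y)); first by exists y; exists i.
  by move=> z [j [_ <-]].
move=> /(_ (exist _ _ Hc)) /= E.
have : True by [].
by rewrite -E.
Qed.

Lemma swap2 (K : cpx) (a b : vtx K) : simp K (fun z => z = a \/ z = b) -> simp K (fun z => z = b \/ z = a).
Proof. move=> H; apply: (simp_sub H); first by exists a; right. by move=> z [->|->]; [right|left]. Qed.

Lemma path_lift (X Y : cpx) (p : hom X Y) (Hp : cpx_fib p) (w : nat -> vtx Y) (x : vtx X) :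
  proj1_sig p x = w 0 ->
  forall n, (forall i, i < n -> simp Y (fun y => y = w i \/ y = w i.+1)) ->
  exists g : nat -> vtx X, g 0 = x /\ (forall i, i <= n -> proj1_sig p (g i) = w i) /\
    (forall i, i < n -> simp X (fun z => z = g i \/ z = g i.+1)).
Proof.
move=> Hx; elim=> [|n IH] Hw.
  exists (fun _ => x); split=> //; split=> // i; by rewrite leqn0 => /eqP ->.
have [g [g0 [gp ge]]] := IH (fun i Hi => Hw i (ltnW Hi)).
have S0 : (fun y => y = w n \/ y = w n.+1) (proj1_sig p (g n)) by left; apply: gp.
have S1 : (fun y => y = w n \/ y = w n.+1) (w n.+1) by right.
have [a [pa sa]] := edge_lift Hp (Hw n (ltnSn n)) S0 S1.
exists (fun i => if i == n.+1 then a else g i); split; first exact: g0.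
split.
  move=> i; rewrite leq_eqVlt => /orP [/eqP ->|Hi]; first by rewrite eqxx.
  have -> : (i == n.+1) = false by apply/eqP; lia.
  apply: gp; lia.
move=> i Hi.
have -> : (i == n.+1) = false by apply/eqP; lia.
have [->|Hin] := eqVneq i n.
  by rewrite eqxx.
have -> : (i.+1 == n.+1) = false by apply/eqP; lia.
apply: ge; lia.
Qed.

Lemma path_pres (X : cpx) n (g : nat -> vtx X) :
  (forall i, i < n -> simp X (fun z => z = g i \/ z = g i.+1)) ->
  preserves (K := In n) (L := X) (fun j => g j).
Proof.
move=> Hg S [[x0 Sx0] Hadj].
have adj : forall y z, S y -> S z ->
   [\/ nat_of_ord y = nat_of_ord z, (nat_of_ord y).+1 = nat_of_ord z | (nat_of_ord z).+1 = nat_of_ord y].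
  move=> y z Sy Sz; case/or3P: (Hadj y z Sy Sz) => [/eqP->|/eqP|/eqP]; by [constructor 1|constructor 2|constructor 3].
case: (classic (exists y, S y /\ nat_of_ord y = (nat_of_ord x0).+1)) => [[y [Sy Ey]]|N1].
  have Hx0 : nat_of_ord x0 < n by have := ltn_ord y; rewrite Ey.
  apply: (simp_sub (Hg _ Hx0)); first by exists (g x0); exists x0.
  move=> z [j [Sj <-]].
  have : nat_of_ord j = nat_of_ord x0 \/ nat_of_ord j = (nat_of_ord x0).+1.
    by case: (adj j x0 Sj Sx0) => ?; case: (adj j y Sj Sy) => ?; lia.
  by case=> ->; [left|right].
case: (classic (exists y, S y /\ (nat_of_ord y).+1 = nat_of_ord x0)) => [[y [Sy Ey]]|N2].
  have Hy : nat_of_ord y < n by have := ltn_ord x0; rewrite -Ey.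
  apply: (simp_sub (Hg _ Hy)); first by exists (g y); exists y.
  move=> z [j [Sj <-]].
  have : nat_of_ord j = nat_of_ord y \/ nat_of_ord j = (nat_of_ord y).+1.
    by case: (adj j x0 Sj Sx0) => ?; case: (adj j y Sj Sy) => ?; lia.
  by case=> ->; [left|right].
apply: (simp_sub (simp_single (g x0))); first by exists (g x0); exists x0.
move=> z [j [Sj <-]].
case: (adj j x0 Sj Sx0) => E; first by rewrite E.
- by exfalso; apply: N2; exists j; split.
- by exfalso; apply: N1; exists j; split.
Qed.

Lemma Ein n (Y : cpx) (v : hom (In n) Y) (a b : 'I_n.+1) :
  (nat_of_ord a).+1 = nat_of_ord b -> simp Y (fun y => y = proj1_sig v a \/ y = proj1_sig v b).
Proof.
move=> E.
have HS : simp (In n) (fun z => z = a \/ z = b).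
  change (In_simp (fun z => z = a \/ z = b)); split; first by exists a; left.
  move=> y z [->|->] [->|->]; rewrite ?eqxx //= ?E ?eqxx ?orbT //.
have := proj2_sig v _ HS => H; apply: (simp_sub H); first by exists (proj1_sig v a); left.
by move=> y [->|->]; [exists a| exists b]; split; auto.
Qed.

Lemma lift0 n (X Y : cpx) (p : hom X Y) (Hp : cpx_fib p) (v : hom (In n) Y) x :
  proj1_sig p x = proj1_sig v ord0 ->
  exists h : hom (In n) X, proj1_sig h ord0 = x /\ forall b, proj1_sig p (proj1_sig h b) = proj1_sig v b.
Proof.
move=> Hx.
have Hx' : proj1_sig p x = (fun i => proj1_sig v (inord i)) 0.
  rewrite Hx /=; congr (proj1_sig v); apply: val_inj; by rewrite /= inordK.
have Hw : forall i, i < n -> simp Y (fun y => y = (fun i => proj1_sig v (inord i)) i \/ y = (fun i => proj1_sig v (inord i)) i.+1).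
  move=> i Hi; apply: Ein; rewrite !inordK //; lia.
have [g [g0 [gp ge]]] := path_lift Hp Hx' Hw.
exists (exist _ _ (path_pres ge)); split=> //= b.
by rewrite gp ?inord_val // -ltnS.
Qed.

Lemma liftN n (X Y : cpx) (p : hom X Y) (Hp : cpx_fib p) (v : hom (In n) Y) x :
  proj1_sig p x = proj1_sig v ord_max ->
  exists h : hom (In n) X, proj1_sig h ord_max = x /\ forall b, proj1_sig p (proj1_sig h b) = proj1_sig v b.
Proof.
move=> Hx.
have Hx' : proj1_sig p x = (fun i => proj1_sig v (inord (n - i))) 0.
  rewrite Hx /=; congr (proj1_sig v); apply: val_inj; by rewrite /= subn0 inordK.
have Hw : forall i, i < n -> simp Y (fun y => y = (fun i => proj1_sig v (inord (n - i))) i \/ y = (fun i => proj1_sig v (inord (n - i))) i.+1).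
  move=> i Hi; apply: swap2; apply: Ein; rewrite !inordK //; lia.
have [g [g0 [gp ge]]] := path_lift Hp Hx' Hw.
have ge' : forall k, k < n -> simp X (fun z => z = g (n - k) \/ z = g (n - k.+1)).
  move=> k Hk; apply: swap2; have := ge (n - k.+1) ltac:(lia).
  by have -> : (n - k.+1).+1 = n - k by lia.
exists (exist _ _ (path_pres ge')); split=> /=; first by rewrite subnn.
move=> b; rewrite gp; last by lia.
congr (proj1_sig v); apply: val_inj; rewrite /= inordK; have := ltn_ord b; lia.
Qed.

Theorem lemma6p6 :
  forall n : nat, 0 < n ->
    cofibrant (In n) /\ cofibrant K1 /\
    (forall e : 'I_n.+1, e = ord0 \/ e = ord_max -> cofibration (endpt e)).
Proof.
move=> n _; split; last split.
- move=> X Y p Hp u v _.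
  have [x Hx] := surj Hp (proj1_sig v ord0).
  have [h [_ Hh]] := lift0 Hp.1 Hx.
  by exists h; split => // -[].
- move=> X Y p Hp u v _.
  have [x Hx] := surj Hp (proj1_sig v tt).
  have Hc : preserves (K := K1) (L := X) (fun _ => x).
    move=> S [i Si]; apply: (simp_sub (simp_single x)); first by exists x; exists i.
    by move=> z [j [_ <-]].
  by exists (exist _ _ Hc); split => // -[].
- move=> e He X Y p Hp u v Huv.
  case: He => ?; subst e.
  + have [h [h0 Hh]] := lift0 Hp.1 (Huv tt).
    by exists h; split => // -[].
  + have [h [h0 Hh]] := liftN Hp.1 (Huv tt).
    by exists h; split => // -[].
Qed.
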